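(* Let $(L,\preceq,\bot,\top)$ be a bounded lattice with at least three elements. Every non-empty family of minimal blocks of $L$ in which no block is repeated is a family of independent blocks.
   Context: For $k\in L$ let ${\uparrow}k=\{x\in L\mid k\preceq x\}$ and ${\downarrow}k=\{x\in L\mid x\preceq k\}$. A block of $L$ is a sublattice $K\subsetneq L$ (a proper subset) such that $K\setminus\{\bot,\top\}\neq\varnothing$ and $({\uparrow}k\cup{\downarrow}k)\setminus\{\bot,\top\}\subseteq K$ for every $k\in K\setminus\{\bot,\top\}$. A block $K$ is minimal if there is no block $K'$ of $L$ with $K'\subsetneq K$. Two blocks $K_1,K_2$ are independent if $K_1\cap K_2\subseteq\{\bot,\top\}$; a family of blocks is a family of independent blocks if its members are pairwise independent. *)

(* Defs.v *)
From HB Require Import structures.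
From mathcomp Require Import all_boot all_order.
Set Implicit Arguments. Unset Strict Implicit. Unset Printing Implicit Defensive.
Import Order.TTheory.
Local Open Scope order_scope.

Section Blocks.
Context {d : Order.disp_t} {L : tbLatticeType d}.

(* subsets of L are predicates (L may be infinite) *)
Definition sublattice (K : L -> Prop) : Prop :=
  forall x y, K x -> K y -> K (x `&` y) /\ K (x `|` y).

Definition subset_of (A B : L -> Prop) : Prop := forall x, A x -> B x.

Definition proper_subset_of (A B : L -> Prop) : Prop :=
  subset_of A B /\ exists x, B x /\ ~ A x.

Definition is_block (K : L -> Prop) : Prop :=
  [/\ sublattice K,
      (exists x : L, ~ K x),
      (exists k, K k /\ k <> \bot /\ k <> \top)
    & forall k, K k -> k <> \bot -> k <> \top ->
        forall x, (k <= x \/ x <= k) -> x <> \bot -> x <> \top -> K x].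

Definition minimal_block (K : L -> Prop) : Prop :=
  is_block K /\ forall K', is_block K' -> ~ proper_subset_of K' K.

Definition independent (K1 K2 : L -> Prop) : Prop :=
  forall x, K1 x -> K2 x -> x = \bot \/ x = \top.

End Blocks.

(* Main.v *)
Require Import Defs.
From HB Require Import structures.
From mathcomp Require Import all_boot all_order.
From Stdlib Require Import Classical.
Local Open Scope order_scope.

Theorem proposition20 (d : Order.disp_t) (L : tbLatticeType d)
  (three : exists a b c : L, [/\ a <> b, b <> c & a <> c])
  (I : Type) (F : I -> (L -> Prop))
  (nonempty : inhabited I)
  (minF : forall i, minimal_block (F i))
  (norep : forall i j, i <> j -> ~ (forall x, F i x <-> F j x)) :
  forall i j, i <> j -> independent (F i) (F j).
Proof.
move=> i j ij x Hi Hj.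
apply: NNPP => H.
have xb : x <> \bot by move=> e; apply: H; left.
have xt : x <> \top by move=> e; apply: H; right.
have blk : forall A B : L -> Prop, is_block A -> is_block B -> A x -> B x ->
    is_block (fun y => A y /\ B y).
  move=> A B [sA [z nz] _ cA] [sB _ _ cB] Ax Bx; split.
  - move=> u v [Au Bu] [Av Bv].
    have [h1 h2] := sA u v Au Av; have [h3 h4] := sB u v Bu Bv; tauto.
  - by exists z => -[].
  - by exists x.
  - move=> k [Ak Bk] kb kt y hy yb yt; split; [exact: cA k Ak kb kt y hy yb yt|exact: cB k Bk kb kt y hy yb yt].
have sub : forall A B : L -> Prop, minimal_block A -> is_block B -> A x -> B x ->
    forall y, A y -> B y.
  move=> A B [bA mA] bB Ax Bx y Ay.
  apply: NNPP => nBy; apply: (mA _ (blk A B bA bB Ax Bx)); split.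
    by move=> z [].
  by exists y; split => // -[].
have [bi _] := minF i; have [bj _] := minF j.
apply: (norep i j ij) => y; split.
  exact: sub _ _ (minF i) bj Hi Hj y.
exact: sub _ _ (minF j) bi Hj Hi y.
Qed.
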